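(* Consider the problem and the SC-SCSG algorithm described in the context, and suppose Assumptions (A2) and (A6) hold. Then at every inner iteration $k$ of epoch $s$, with $A=|\mathcal A|$ and $D=|\mathcal D_1|$, $$\mathbb{E}_{\mathcal A,\mathcal D_1}\|\hat G_k-G(x_k)\|^2\le 4\Big(\frac{\mathbb{I}(A<n)}{A}+\frac{\mathbb{I}(D<n)}{D}\Big)B_G^2\,\mathbb{E}\|x_k-\tilde x_s\|^2+2\frac{\mathbb{I}(D<n)}{D}H_1 .$$
   Context: Problem: minimize $f(x)=F(G(x))=\frac1n\sum_{i=1}^nF_i\big(\frac1n\sum_{j=1}^nG_j(x)\big)$ over $x\in\mathbb{R}^N$, where $G_j:\mathbb{R}^N\to\mathbb{R}^M$, $F_i:\mathbb{R}^M\to\mathbb{R}$, $G=\frac1n\sum_jG_j$, $F=\frac1n\sum_iF_i$, $\partial G_j(x)\in\mathbb{R}^{M\times N}$ is the Jacobian, so $\nabla f(x)=(\partial G(x))^\top\nabla F(G(x))$. For a multiset $\mathcal S$ of indices from $[n]$, $G_{\mathcal S}=\frac1{|\mathcal S|}\sum_{j\in\mathcal S}G_j$, and similarly $\partial G_{\mathcal S}$, $F_{\mathcal S}$. $\mathbb{I}(\cdot)$ is the indicator function. Algorithm (SC-SCSG): parameters $K$ (inner iterations), $S$ (epochs), step $\eta>0$, batch sizes $A\le D$, initial point $\tilde x_0$. For each epoch $s=0,\dots,S-1$: form $\mathcal D_1,\mathcal D_2$, each of $D$ indices sampled independently and uniformly from $[n]$ (independent of each other); set $\nabla\hat f_{\mathcal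 D}(\tilde x_s)=(\partial G_{\mathcal D_1}(\tilde x_s))^\top\nabla F_{\mathcal D_2}(G_{\mathcal D_1}(\tilde x_s))$ and $x_0=\tilde x_s$. For $k=0,\dots,K-1$: sample a mini-batch $\mathcal A$ of $A$ indices from $[n]$ (independent of $\mathcal D$), set $\hat G_k=G_{\mathcal A}(x_k)-G_{\mathcal A}(\tilde x_s)+G_{\mathcal D_1}(\tilde x_s)$; draw $i_k,j_k$ independently uniformly from $[n]$; set $\nabla\tilde f_k=(\partial G_{j_k}(x_k))^\top\nabla F_{i_k}(\hat G_k)-(\partial G_{j_k}(\tilde x_s))^\top\nabla F_{i_k}(G_{\mathcal D_1}(\tilde x_s))+\nabla\hat f_{\mathcal D}(\tilde x_s)$ and $x_{k+1}=x_k-\eta\nabla\tilde f_k$. Then $\tilde x_{s+1}=x_K$. Within an epoch $x_k$ denotes the $k$-th inner iterate of epoch $s$. (A2) For all $j$ and $x,y\in\mathbb{R}^N$: $\|\partial G_j(x)\|\le B_G$ (so $\|G_j(x)-G_j(y)\|\le B_G\|x-y\|$) and $\|\partial G_j(x)-\partial G_j(y)\|\le L_G\|x-y\|$. (A6) For all $x\in\mathbb{R}^N,y\in\mathbb{R}^M$: $\frac1n\sum_{i=1}^n\|G(x)-G_i(x)\|^2\le H_1$ and $\frac1{n^2}\sum_{i,j=1}^n\|(\partial G(x))^\top\nabla F(y)-(\partial G_j(x))^\top\nabla F_i(y)\|^2\le H_2$. *)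

(* Defs.v *)
From HB Require Import structures.
From mathcomp Require Import all_boot all_order all_algebra.
From mathcomp Require Import all_classical all_reals all_analysis.
Set Implicit Arguments. Unset Strict Implicit. Unset Printing Implicit Defensive.
Import Order.TTheory GRing.Theory Num.Theory.
Local Open Scope ring_scope.

Section SCSG.
Variable R : realType.

Definition sqnorm (p : nat) (v : 'rV[R]_p) : R := \sum_(i < p) v 0 i ^+ 2.
Definition enorm (p : nat) (v : 'rV[R]_p) : R := Num.sqrt (sqnorm v).

(* operator-norm bound (Euclidean): ||P|| <= B, i.e. ||P v|| <= B ||v||
   for every v (v written as a row, so P v is v *m P^T) *)
Definition opnorm_le (m p : nat) (P : 'M[R]_(m, p)) (B : R) : Prop :=
  forall v : 'rV[R]_p, enorm (v *m P^T) <= B * enorm v.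

(* Jacobian in the paper's convention: an m x p matrix for f : R^p -> R^m *)
Definition Jac (p m : nat) (f : 'rV[R]_p -> 'rV[R]_m) (x : 'rV[R]_p) : 'M[R]_(m, p) :=
  (jacobian f x)^T.

Definition grad (m : nat) (f : 'rV[R]_m -> R) (y : 'rV[R]_m) : 'rV[R]_m :=
  \row_(i < m) 'D_(delta_mx 0 i) f y.

Definition bavg (n : nat) (V : lmodType R) (S : seq 'I_n) (f : 'I_n -> V) : V :=
  (size S)%:R^-1 *: \sum_(j <- S) f j.

Variables (n N M : nat) (G : 'I_n -> 'rV[R]_N -> 'rV[R]_M)
          (F : 'I_n -> 'rV[R]_M -> R).

Definition G_S (S : seq 'I_n) (x : 'rV[R]_N) : 'rV[R]_M := bavg S (fun j => G j x).
Definition dG_S (S : seq 'I_n) (x : 'rV[R]_N) : 'M[R]_(M, N) := bavg S (fun j => Jac (G j) x).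
Definition F_S (S : seq 'I_n) (y : 'rV[R]_M) : R := bavg S (fun i => F i y).

Definition Gbar (x : 'rV[R]_N) : 'rV[R]_M := n%:R^-1 *: \sum_(j < n) G j x.
Definition Fbar (y : 'rV[R]_M) : R := n%:R^-1 * \sum_(i < n) F i y.

(* (dG_D1(xt))^T grad F_D2 (G_D1(xt)), written as a row vector *)
Definition grad_est (D1 D2 : seq 'I_n) (xt : 'rV[R]_N) : 'rV[R]_N :=
  grad (F_S D2) (G_S D1 xt) *m dG_S D1 xt.

Definition Ghat (SA D1 : seq 'I_n) (xt x : 'rV[R]_N) : 'rV[R]_M :=
  G_S SA x - G_S SA xt + G_S D1 xt.

Definition inner_step (eta : R) (D1 D2 : seq 'I_n) (xt : 'rV[R]_N)
    (x : 'rV[R]_N) (w : seq 'I_n * 'I_n * 'I_n) : 'rV[R]_N :=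
  let: (SA, i, j) := w in
  x - eta *: (grad (F i) (Ghat SA D1 xt x) *m Jac (G j) x
              - grad (F i) (G_S D1 xt) *m Jac (G j) xt
              + grad_est D1 D2 xt).

Definition iterate (eta : R) (D1 D2 : seq 'I_n) (xt : 'rV[R]_N)
    (ws : seq (seq 'I_n * 'I_n * 'I_n)) : 'rV[R]_N :=
  foldl (inner_step eta D1 D2 xt) xt ws.

End SCSG.

(* Expectation over a mini-batch of m indices drawn independently and
   uniformly from [n] (with replacement); by the convention implicit in the
   indicator I(m < n) of the paper, a batch of size m = n is the full set. *)
Definition Ebatch (R : realType) (n m : nat) (P : seq 'I_n -> R) : R :=
  if (m < n)%N then
    ((n ^ m)%:R)^-1 * \sum_(b : {ffun 'I_m -> 'I_n}) P [seq b t | t <- enum 'I_m]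
  else P (enum 'I_n).

Definition Eidx (R : realType) (n : nat) (P : 'I_n -> R) : R :=
  n%:R^-1 * \sum_(i < n) P i.

Fixpoint Esteps (R : realType) (n A k : nat)
    (P : seq (seq 'I_n * 'I_n * 'I_n) -> R) : R :=
  match k with
  | 0 => P [::]
  | k'.+1 => @Esteps R n A k' (fun ws =>
        @Ebatch R n A (fun a => @Eidx R n (fun i => @Eidx R n (fun j =>
          P (rcons ws (a, i, j))))))
  end.

Definition Ind (R : realType) (b : bool) : R := if b then 1 else 0.

Arguments Ebatch {R} n m P.
Arguments Eidx {R} n P.
Arguments Esteps {R} n A k P.

(* Main.v *)
Require Import Defs.
From HB Require Import structures.
From mathcomp Require Import all_boot all_order all_algebra.
From mathcomp Require Import all_classical all_reals all_analysis.
From mathcomp Require Import ring lra.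
Import Order.TTheory GRing.Theory Num.Theory.
Local Open Scope ring_scope.
Set Implicit Arguments.
Unset Strict Implicit.


Lemma sum_ffun_pair (R : realType) m n (f g : 'I_n -> R) (t s : 'I_m) :
 \sum_(b : {ffun 'I_m -> 'I_n}) f (b t) * g (b s) =
 \prod_(r < m) \sum_(j < n) ((if r == t then f j else 1) * (if r == s then g j else 1)).
Proof.
rewrite bigA_distr_bigA; apply: eq_bigr => b _.
rewrite big_split /= -!big_mkcond /= !big_pred1_eq //.
Qed.

Lemma sum_ffun_pair2 (R : realType) m n (w : 'I_n -> R) (t s : 'I_m) : \sum_j w j = 0 ->
 \sum_(b : {ffun 'I_m -> 'I_n}) w (b t) * w (b s) =
 if t == s then (n ^ m.-1)%:R * \sum_j w j ^+ 2 else 0.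
Proof.
move=> w0; rewrite sum_ffun_pair (bigD1 t) //= eqxx.
case: eqP => [<-|/eqP nts].
  rewrite mulrC; congr (_ * _).
  rewrite (eq_bigr (fun _ => n%:R)); last first.
    by move=> r rt; rewrite (negPf rt) sumr_const card_ord mulr1.
  by rewrite prodr_const cardC1 card_ord natrX.
under eq_bigr do rewrite mulr1.
by rewrite w0 mul0r.
Qed.

Lemma sum_ffun_sq (R : realType) m n (w : 'I_n -> R) : \sum_j w j = 0 ->
  \sum_(b : {ffun 'I_m -> 'I_n}) (\sum_(t < m) w (b t)) ^+ 2
   = (m * n ^ m.-1)%:R * \sum_j w j ^+ 2.
Proof.
move=> w0.
have E : forall b : {ffun 'I_m -> 'I_n}, (\sum_(t < m) w (b t)) ^+ 2 =
   \sum_(t < m) \sum_(s < m) w (b t) * w (b s).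
  by move=> b; rewrite expr2 big_distrl /=; apply: eq_bigr => t _; rewrite big_distrr.
rewrite (eq_bigr _ (fun b _ => E b)) exchange_big /=.
rewrite (eq_bigr (fun t => (n ^ m.-1)%:R * \sum_j w j ^+ 2)); last first.
  move=> t _; rewrite exchange_big /= (bigD1 t) //= sum_ffun_pair2 // eqxx [X in _ + X]big1 ?addr0 //.
  by move=> s st; rewrite sum_ffun_pair2 // eq_sym (negPf st).
by rewrite sumr_const card_ord -[_ *+ m]mulr_natl natrM mulrA.
Qed.

Lemma bavg_map (R : realType) m n (V : lmodType R) (b : 'I_m -> 'I_n) (f : 'I_n -> V) :
  bavg [seq b t | t <- enum 'I_m] f = m%:R^-1 *: \sum_(t < m) f (b t).
Proof. by rewrite /bavg size_map size_enum_ord big_map big_enum. Qed.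

Lemma bavg_full (R : realType) n (V : lmodType R) (f : 'I_n -> V) :
  bavg (enum 'I_n) f = n%:R^-1 *: \sum_(j < n) f j.
Proof. by rewrite /bavg size_enum_ord big_enum. Qed.

Lemma sqnormZ (R : realType) M (a : R) (v : 'rV[R]_M) : sqnorm (a *: v) = a ^+ 2 * sqnorm v.
Proof. by rewrite /sqnorm mulr_sumr; apply: eq_bigr => i _; rewrite mxE exprMn. Qed.

Lemma sqnorm_ge0 (R : realType) M (v : 'rV[R]_M) : 0 <= sqnorm v.
Proof. by apply: sumr_ge0 => i _; rewrite sqr_ge0. Qed.

Lemma var_batch (R : realType) M m n (v : 'I_n -> 'rV[R]_M) : (0 < m)%N -> (0 < n)%N ->
 (n ^ m)%:R^-1 * \sum_(b : {ffun 'I_m -> 'I_n})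
    sqnorm (bavg [seq b t | t <- enum 'I_m] v - n%:R^-1 *: \sum_j v j)
 = m%:R^-1 * (n%:R^-1 * \sum_j sqnorm (v j - n%:R^-1 *: \sum_j v j)).
Proof.
move=> m0 n0.
set c := n%:R^-1 *: \sum_j v j.
set u := fun j => v j - c.
have u0 : \sum_j u j = 0.
  rewrite /u sumrB sumr_const card_ord -[c *+ n]scaler_nat /c scalerA mulfV ?scale1r ?subrr //.
  by rewrite pnatr_eq0 -lt0n.
have E : forall b : {ffun 'I_m -> 'I_n},
   bavg [seq b t | t <- enum 'I_m] v - c = m%:R^-1 *: \sum_(t < m) u (b t).
  move=> b; rewrite bavg_map /u sumrB sumr_const card_ord scalerBr -[c *+ m]scaler_nat scalerA mulVf ?scale1r //.
  by rewrite pnatr_eq0 -lt0n.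
rewrite (eq_bigr _ (fun b _ => congr1 (@sqnorm R M) (E b))).
under eq_bigr do rewrite sqnormZ /sqnorm.
rewrite -mulr_sumr exchange_big /=.
have F : forall i : 'I_M, \sum_(b : {ffun 'I_m -> 'I_n}) (\sum_(t < m) u (b t)) 0 i ^+ 2
   = (m * n ^ m.-1)%:R * \sum_j u j 0 i ^+ 2.
  move=> i; rewrite -sum_ffun_sq; last by have := congr1 (fun A : 'rV[R]_M => A 0 i) u0; rewrite /= summxE mxE.
  by apply: eq_bigr => b _; rewrite summxE.
rewrite (eq_bigr _ (fun i _ => F i)) -mulr_sumr exchange_big /=.
rewrite !mulrA; congr (_ * _).
rewrite natrM natrX -(prednK m0) /= exprS.
rewrite natrX.
have nn : n%:R != 0 :> R by rewrite pnatr_eq0 -lt0n.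
have mn : (m.-1.+1)%:R != 0 :> R by rewrite pnatr_eq0.
field.
by rewrite nn nat1r mn expf_eq0 (negPf nn) andbF.
Qed.

Lemma var_le_scalar (R : realType) n (a : 'I_n -> R) : (0 < n)%N ->
  \sum_j (a j - n%:R^-1 * \sum_j a j) ^+ 2 <= \sum_j a j ^+ 2.
Proof.
move=> n0; set c := n%:R^-1 * \sum_j a j.
have Sa : \sum_j a j = n%:R * c.
  by rewrite /c mulrA mulfV ?mul1r // pnatr_eq0 -lt0n.
rewrite (eq_bigr (fun j => a j ^+ 2 + (- (2 * c) * a j + c ^+ 2))); last by move=> j _; ring.
rewrite big_split /= big_split /= -mulr_sumr sumr_const card_ord Sa -[c ^+ 2 *+ n]mulr_natr.
have x0 : 0 <= n%:R :> R by rewrite ler0n.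
have := mulr_ge0 x0 (sqr_ge0 c).
move: (\sum_(j < n) a j ^+ 2) => S; nra.
Qed.

Lemma var_le (R : realType) n M (y : 'I_n -> 'rV[R]_M) : (0 < n)%N ->
  \sum_j sqnorm (y j - n%:R^-1 *: \sum_j y j) <= \sum_j sqnorm (y j).
Proof.
move=> n0; rewrite /sqnorm exchange_big [X in _ <= X]exchange_big /=.
apply: ler_sum => i _.
have -> : \sum_j (y j - n%:R^-1 *: \sum_j y j) 0 i ^+ 2 = \sum_j (y j 0 i - n%:R^-1 * \sum_j y j 0 i) ^+ 2.
  by apply: eq_bigr => j _; rewrite !mxE summxE.
exact: var_le_scalar.
Qed.

Lemma split_id (V : zmodType) (p q r s t : V) :
  p - q + r - s = (p - q - (s - t)) + (r - t).
Proof. by rewrite opprB -!addrA; congr (_ + (_ + _)); rewrite addrCA subrKC addrC. Qed.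

Lemma sqnormD (R : realType) M (u v : 'rV[R]_M) : sqnorm (u + v) <= 2 * sqnorm u + 2 * sqnorm v.
Proof.
rewrite /sqnorm !mulr_sumr -big_split /=; apply: ler_sum => i _; rewrite mxE.
move: (u 0 i) (v 0 i) => x y; have := sqr_ge0 (x - y); rewrite !expr2 => h; nra.
Qed.

Lemma sqnormN (R : realType) M (v : 'rV[R]_M) : sqnorm (- v) = sqnorm v.
Proof. by rewrite -scaleN1r sqnormZ sqrrN expr1n mul1r. Qed.

Lemma Ebatch_le (R : realType) n m (P Q : seq 'I_n -> R) : (forall s, P s <= Q s) ->
  Ebatch n m P <= Ebatch n m Q.
Proof.
move=> PQ; rewrite /Ebatch; case: ifP => _ //.
by apply: ler_wpM2l; [rewrite invr_ge0 ler0n | apply: ler_sum => b _].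
Qed.

Lemma Ebatch_lin (R : realType) n m (P Q : seq 'I_n -> R) c d :
  Ebatch n m (fun s => c * P s + d * Q s) = c * Ebatch n m P + d * Ebatch n m Q.
Proof.
rewrite /Ebatch; case: ifP => _ //.
by rewrite big_split /= -!mulr_sumr mulrDr !mulrA ![_^-1 * _]mulrC.
Qed.

Lemma Ebatch_cst (R : realType) n m (d : R) : Ebatch n m (fun _ : seq 'I_n => d) = d.
Proof.
rewrite /Ebatch; case: ifPn => // mn.
rewrite sumr_const card_ffun !card_ord -[d *+ _]mulr_natl mulrA mulVf ?mul1r //.
by rewrite pnatr_eq0 expn_eq0 negb_and; apply/orP; left; rewrite -lt0n; apply: leq_ltn_trans mn.
Qed.

Lemma Ebatch_lincst (R : realType) n m (P : seq 'I_n -> R) c d :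
  Ebatch n m (fun s => c * P s + d) = c * Ebatch n m P + d.
Proof.
have := @Ebatch_lin R n m P (fun _ => 1) c d; rewrite Ebatch_cst mulr1.
by move=> <-; congr (Ebatch _ _ _); apply: funext => s; rewrite mulr1.
Qed.

Lemma Eidx_le (R : realType) n (P Q : 'I_n -> R) : (forall s, P s <= Q s) -> Eidx n P <= Eidx n Q.
Proof.
move=> PQ; rewrite /Eidx.
by apply: ler_wpM2l; [rewrite invr_ge0 ler0n | apply: ler_sum => b _].
Qed.

Lemma Eidx_lincst (R : realType) n (P : 'I_n -> R) c d : (0 < n)%N ->
  Eidx n (fun s => c * P s + d) = c * Eidx n P + d.
Proof.
move=> n0; rewrite /Eidx big_split /= -mulr_sumr sumr_const card_ord -[d *+ n]mulr_natl.
rewrite mulrDr mulrA [_^-1 * c]mulrC -mulrA; congr (_ + _).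
by rewrite mulrA mulVf ?mul1r // pnatr_eq0 -lt0n.
Qed.

Lemma Esteps_le (R : realType) n A k (P Q : seq (seq 'I_n * 'I_n * 'I_n) -> R) :
  (forall s, P s <= Q s) -> Esteps n A k P <= Esteps n A k Q.
Proof.
elim: k P Q => [|k IH] P Q PQ //=.
apply: IH => ws; apply: Ebatch_le => a; apply: Eidx_le => i; apply: Eidx_le => j.
exact: PQ.
Qed.

Lemma Esteps_lincst (R : realType) n A k (P : seq (seq 'I_n * 'I_n * 'I_n) -> R) c d : (0 < n)%N ->
  Esteps n A k (fun s => c * P s + d) = c * Esteps n A k P + d.
Proof.
move=> n0; elim: k P => [|k IH] P //=.
rewrite -IH; congr (Esteps _ _ _ _); apply: funext => ws.
rewrite -Ebatch_lincst; congr (Ebatch _ _ _); apply: funext => a.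
rewrite -Eidx_lincst //; congr (Eidx _ _); apply: funext => i.
by rewrite -Eidx_lincst.
Qed.

Lemma Ebatch_ge0 (R : realType) n m (P : seq 'I_n -> R) : (forall s, 0 <= P s) -> 0 <= Ebatch n m P.
Proof. by move=> h; have := @Ebatch_le R n m (fun _ => 0) P h; rewrite Ebatch_cst. Qed.

Lemma Esteps_ge0 (R : realType) n A k (P : seq (seq 'I_n * 'I_n * 'I_n) -> R) :
  (forall s, 0 <= P s) -> 0 <= Esteps n A k P.
Proof.
elim: k P => [|k IH] P h //=.
apply: IH => ws; apply: Ebatch_ge0 => a; rewrite /Eidx; apply: mulr_ge0; first by rewrite invr_ge0 ler0n.
apply: sumr_ge0 => i _; apply: mulr_ge0; first by rewrite invr_ge0 ler0n.
by apply: sumr_ge0 => j _.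
Qed.

Lemma sq_le (R : realType) (a b B : R) : 0 <= a -> a <= B * b -> a ^+ 2 <= B ^+ 2 * b ^+ 2.
Proof.
move=> e1 h; have h2 : 0 <= B * b + a by lra.
have := mulr_ge0 (ltac:(by rewrite subr_ge0) : 0 <= B * b - a) h2; nra.
Qed.

Unset Implicit Arguments.

Theorem lemma3 (R : realType) (n N M : nat)
    (G : 'I_n -> 'rV[R]_N -> 'rV[R]_M) (F : 'I_n -> 'rV[R]_M -> R)
    (B_G L_G H1 H2 eta : R) (K A D : nat) (xt : 'rV[R]_N) (k : nat) :
  (0 < n)%N -> (0 < A)%N -> (A <= D)%N -> (D <= n)%N -> 0 < eta ->
  (forall j x, differentiable (G j) x) ->
  (forall i y, differentiable (F i) y) ->
  (* (A2) *)
  (forall j x, opnorm_le (Jac (G j) x) B_G) ->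
  (forall j x y, enorm (G j x - G j y) <= B_G * enorm (x - y)) ->
  (forall j x y, opnorm_le (Jac (G j) x - Jac (G j) y) (L_G * enorm (x - y))) ->
  (* (A6) *)
  (forall x, n%:R^-1 * \sum_(i < n) sqnorm (Gbar G x - G i x) <= H1) ->
  (forall x y, (n%:R ^+ 2)^-1 * \sum_(i < n) \sum_(j < n)
      sqnorm (grad (Fbar F) y *m Jac (Gbar G) x - grad (F i) y *m Jac (G j) x)
    <= H2) ->
  (k < K)%N ->
  Ebatch n D (fun D1 => Ebatch n D (fun D2 => Esteps n A k (fun ws =>
    Ebatch n A (fun SA =>
      sqnorm (Ghat G SA D1 xt (iterate G F eta D1 D2 xt ws)
              - Gbar G (iterate G F eta D1 D2 xt ws))))))
  <= 4 * (Ind R (A < n)%N / A%:R + Ind R (D < n)%N / D%:R) * B_G ^+ 2 *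
       Ebatch n D (fun D1 => Ebatch n D (fun D2 => Esteps n A k (fun ws =>
         sqnorm (iterate G F eta D1 D2 xt ws - xt))))
     + 2 * (Ind R (D < n)%N / D%:R) * H1.

Proof.
move=> n0 A0 AD Dn eta0 _ _ _ Lip _ H1h _ _.
have D0 : (0 < D)%N by apply: leq_trans AD.
set cA := Ind R (A < n)%N / A%:R.
set cD := Ind R (D < n)%N / D%:R.
have cA0 : 0 <= cA by rewrite /cA /Ind; case: ifP => _; rewrite ?mul0r // mul1r invr_ge0 ler0n.
have cD0 : 0 <= cD by rewrite /cD /Ind; case: ifP => _; rewrite ?mul0r // mul1r invr_ge0 ler0n.
have Lip2 : forall j x, sqnorm (G j x - G j xt) <= B_G ^+ 2 * sqnorm (x - xt).
  move=> j x; have h := Lip j x xt; move: h; rewrite /enorm => h.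
  rewrite -(sqr_sqrtr (sqnorm_ge0 (G j x - G j xt))) -[sqnorm (x - xt)](sqr_sqrtr (sqnorm_ge0 _)).
  exact: sq_le (sqrtr_ge0 _) h.
have Ha : forall x, Ebatch n A (fun SA => sqnorm (G_S G SA x - G_S G SA xt - (Gbar G x - Gbar G xt)))
    <= cA * B_G ^+ 2 * sqnorm (x - xt).
  move=> x; set v := fun j => G j x - G j xt.
  have E1 : forall SA, G_S G SA x - G_S G SA xt = bavg SA v.
    by move=> SA; rewrite /G_S /bavg -scalerBr -sumrB.
  have E2 : Gbar G x - Gbar G xt = n%:R^-1 *: \sum_j v j by rewrite /Gbar -scalerBr -sumrB.
  rewrite /Ebatch /cA /Ind; case: ifPn => An.
  - under eq_bigr => b _ do rewrite E1 E2.
    rewrite var_batch // mul1r -mulrA; apply: ler_wpM2l; first by rewrite invr_ge0 ler0n.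
    apply: (@le_trans _ _ (n%:R^-1 * \sum_j sqnorm (v j))).
      by apply: ler_wpM2l; [rewrite invr_ge0 ler0n | exact: var_le].
    apply: (@le_trans _ _ (n%:R^-1 * \sum_(j < n) B_G ^+ 2 * sqnorm (x - xt))).
      by apply: ler_wpM2l; [rewrite invr_ge0 ler0n | apply: ler_sum => j _; exact: Lip2].
    rewrite sumr_const card_ord -[B_G ^+ 2 * _ *+ n]mulr_natl -!mulrA mulKf //.
    by rewrite pnatr_eq0 -lt0n.
  - rewrite E1 E2 bavg_full subrr !mul0r /sqnorm big1 // => i _.
    by rewrite mxE expr0n.
have Hb : Ebatch n D (fun D1 => sqnorm (G_S G D1 xt - Gbar G xt)) <= cD * H1.
  rewrite /Ebatch /cD /Ind; case: ifPn => Dn'.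
  - have := var_batch (fun j => G j xt) D0 n0; rewrite /= => ->.
    rewrite mul1r; apply: ler_wpM2l; first by rewrite invr_ge0 ler0n.
    under eq_bigr do rewrite -sqnormN opprB.
    exact: H1h.
  - rewrite /G_S bavg_full subrr !mul0r /sqnorm big1 // => i _.
    by rewrite mxE expr0n.
have Hin : forall D1 x, Ebatch n A (fun SA => sqnorm (Ghat G SA D1 xt x - Gbar G x))
   <= 2 * (cA * B_G ^+ 2) * sqnorm (x - xt) + 2 * sqnorm (G_S G D1 xt - Gbar G xt).
  move=> D1 x.
  apply: (@le_trans _ _ (Ebatch n A (fun SA =>
     2 * sqnorm (G_S G SA x - G_S G SA xt - (Gbar G x - Gbar G xt))
     + 2 * sqnorm (G_S G D1 xt - Gbar G xt)))).
    by apply: Ebatch_le => SA; rewrite /Ghat (split_id _ _ _ _ (Gbar G xt)); exact: sqnormD.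
  rewrite Ebatch_lincst -mulrA; apply: lerD => //; apply: ler_wpM2l => //; exact: Ha.
apply: (@le_trans _ _ (Ebatch n D (fun D1 => Ebatch n D (fun D2 => Esteps n A k (fun ws =>
    2 * (cA * B_G ^+ 2) * sqnorm (iterate G F eta D1 D2 xt ws - xt)
    + 2 * sqnorm (G_S G D1 xt - Gbar G xt)))))).
  apply: Ebatch_le => D1; apply: Ebatch_le => D2; apply: Esteps_le => ws; exact: Hin.
have -> : (fun D1 => Ebatch n D (fun D2 => Esteps n A k (fun ws =>
    2 * (cA * B_G ^+ 2) * sqnorm (iterate G F eta D1 D2 xt ws - xt)
    + 2 * sqnorm (G_S G D1 xt - Gbar G xt)))) =
  (fun D1 => 2 * (cA * B_G ^+ 2) * Ebatch n D (fun D2 => Esteps n A k (fun ws =>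
    sqnorm (iterate G F eta D1 D2 xt ws - xt))) + 2 * sqnorm (G_S G D1 xt - Gbar G xt)).
  apply: funext => D1; rewrite -Ebatch_lincst; congr (Ebatch _ _ _); apply: funext => D2.
  by rewrite Esteps_lincst.
rewrite Ebatch_lin.
set E := Ebatch n D (fun D1 => Ebatch n D _).
have E0 : 0 <= E.
  apply: Ebatch_ge0 => D1; apply: Ebatch_ge0 => D2; apply: Esteps_ge0 => ws; exact: sqnorm_ge0.
have p1 := mulr_ge0 (mulr_ge0 cA0 (sqr_ge0 B_G)) E0.
have p2 := mulr_ge0 (mulr_ge0 cD0 (sqr_ge0 B_G)) E0.
move: Hb; set Eb := Ebatch n D _ => Hb.
nra.
Qed.
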